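(* Every pairwise social choice correspondence that is strategyproof and strongly Condorcet-consistent satisfies Condorcet-stability (COS).
   Context: Let $A$ be a finite set of alternatives; a preference profile $R$ assigns a strict total order $\succ_i$ on $A$ to each voter $i$ of a finite non-empty electorate $N\subseteq\{1,2,\dots\}$; $\mathcal{R}^*(A)$ is the set of all profiles over all electorates. $g_R(x,y)=|\{i: x\succ_i y\}|-|\{i: y\succ_i x\}|$; $x\succsim_R y$ iff $g_R(x,y)\ge0$, with strict part $\succ_R$. A Condorcet winner is $x$ with $x\succ_R y$ for all $y\ne x$. An SCC is $f:\mathcal{R}^*(A)\to 2^A\setminus\{\emptyset\}$; it is pairwise if $f(R)=f(R')$ whenever $g_R=g_{R'}$. Fishburn's extension: for $X\ne Y$, $X\succ_i^F Y$ iff $x\succ_i y$ for all $x\in X\setminus Y,y\in Y$ and for all $x\in X,y\in Y\setminus X$. $f$ is strategyproof if no voter $i$ can change only his own preference to move from $R$ to $R'$ with $f(R')\succ_i^F f(R)$. $f$ is strongly Condorcet-consistent if $f(R)=\{x\}$ holds iff $x$ is the Condorcet winner in $R$. $f$ satisfies COS if for every profile $R$ there is no $x\in A$ with $f(R)\setminus\{x\}\ne\emptyset$ and $x\succ_R y$ for all $y\in f(R)\setminus\{x\}$. *)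

(* Defs.v *)
From HB Require Import structures.
From mathcomp Require Import all_boot all_order all_algebra.
From mathcomp Require Import finmap.
Set Implicit Arguments. Unset Strict Implicit. Unset Printing Implicit Defensive.
Local Open Scope fset_scope.

Section SCC.
Variable A : finType.

(* A strict total order on A, given as a boolean relation: r x y means x is
   strictly preferred to y. *)
Definition strict_total (r : rel A) : Prop :=
  [/\ irreflexive r, transitive r & forall x y, x != y -> r x y || r y x].

(* A preference profile: a finite non-empty electorate N of positive
   naturals, and a strict total order for each voter in N.  (Values of
   [pref] outside the electorate are irrelevant.) *)
Record profile := Profile {
  elec : {fset nat};
  pref : nat -> rel A;
  elec_nonempty : elec != fset0;
  elec_pos : forall i, i \in elec -> 0 < i;
  pref_strict : forall i, i \in elec -> strict_total (pref i)
}.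

Definition nprefer (R : profile) (x y : A) : nat :=
  size [seq i <- elec R | pref R i x y].

Definition margin (R : profile) (x y : A) : int :=
  (nprefer R x y)%:Z - (nprefer R y x)%:Z.

Definition maj_weak (R : profile) (x y : A) : bool := (0 <= margin R x y)%R.
Definition maj_strict (R : profile) (x y : A) : bool :=
  maj_weak R x y && ~~ maj_weak R y x.

Definition condorcet_winner (R : profile) (x : A) : Prop :=
  forall y, y != x -> maj_strict R x y.

Definition is_SCC (f : profile -> {set A}) : Prop := forall R, f R != set0.

Definition pairwise_scc (f : profile -> {set A}) : Prop :=
  forall R R' : profile, (forall x y, margin R x y = margin R' x y) -> f R = f R'.

Definition fishburn (r : rel A) (X Y : {set A}) : Prop :=
  [/\ X != Y,
      (forall x y, x \in X :\: Y -> y \in Y -> r x y) &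
      (forall x y, x \in X -> y \in Y :\: X -> r x y)].

Definition i_variant (i : nat) (R R' : profile) : Prop :=
  [/\ i \in elec R, elec R' = elec R &
      forall j, j \in elec R -> j != i -> forall x y, pref R' j x y = pref R j x y].

Definition strategyproof (f : profile -> {set A}) : Prop :=
  forall (i : nat) (R R' : profile), i_variant i R R' ->
    ~ fishburn (pref R i) (f R') (f R).

Definition strongly_condorcet_consistent (f : profile -> {set A}) : Prop :=
  forall (R : profile) (x : A), f R = [set x] <-> condorcet_winner R x.

Definition COS_stable (f : profile -> {set A}) : Prop :=
  forall (R : profile) (x : A),
    ~ ((f R :\ x != set0) /\ (forall y, y \in f R :\ x -> maj_strict R x y)).

End SCC.

(* Main.v *)
Require Import Defs.
From mathcomp Require Import all_boot all_order all_algebra.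
From mathcomp Require Import finmap.
From mathcomp Require Import zify.
Set Implicit Arguments. Unset Strict Implicit. Unset Printing Implicit Defensive.
Import Order.TTheory GRing.Theory Num.Theory.

Definition key (A : finType) (l : A -> nat) (a : A) : nat :=
  l a * #|A| + enum_rank a.
Definition lord (A : finType) (l : A -> nat) : rel A :=
  fun a b => key l a < key l b.

Lemma rank_lt (A : finType) (a : A) : (enum_rank a < #|A|)%N.
Proof. by case: (enum_rank a). Qed.

Lemma lordE (A : finType) (l : A -> nat) a b :
  lord l a b = (l a < l b)%N || ((l a == l b) && (enum_rank a < enum_rank b)%N).
Proof.
rewrite /lord /key.
have ha := rank_lt a; have hb := rank_lt b.
move: ha hb; set ra := nat_of_ord (enum_rank a); set rb := nat_of_ord (enum_rank b).
set N := #|A| => ha hb.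
case: (ltngtP (l a) (l b)) => h /=.
- have := leq_mul (leqnn N) h; rewrite mulnC (mulnC _ (l b)) mulSn => H.
  apply/idP; lia.
- have := leq_mul (leqnn N) h; rewrite mulnC (mulnC _ (l a)) mulSn => H.
  apply/negbTE; rewrite -leqNgt; lia.
- rewrite h; apply/idP/idP; lia.
Qed.

Lemma lord_strict (A : finType) (l : A -> nat) : strict_total (lord l).
Proof.
split.
- by move=> a; rewrite /lord ltnn.
- by move=> b a c; rewrite /lord; apply: ltn_trans.
- move=> a b hab; rewrite !lordE.
  case: (ltngtP (l a) (l b)) => //= h.
  rewrite ?h ?eqxx /=.
  case: (ltngtP (enum_rank a) (enum_rank b)) => //= h2; rewrite ?orbT //.
  by move/ord_inj/enum_rank_inj: h2 => h2; rewrite h2 eqxx in hab.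
Qed.

Local Open Scope fset_scope.

Definition fresh (A : finType) (R : profile A) : nat :=
  (\max_(i <- (elec R : seq nat)) i).+1.

Lemma fresh_notin (A : finType) (R : profile A) i : i \in elec R -> (i < fresh R)%N.
Proof. by move=> hi; rewrite ltnS; exact: (@leq_bigmax_seq _ (elec R : seq nat) xpredT id i hi). Qed.

Definition add_elec (A : finType) (R : profile A) : {fset nat} :=
  fresh R |` ((fresh R).+1 |` elec R).

Definition add_pref (A : finType) (R : profile A) (P1 P2 : rel A) : nat -> rel A :=
  fun i => if i == fresh R then P1 else if i == (fresh R).+1 then P2 else pref R i.

Lemma add_nonempty (A : finType) (R : profile A) : add_elec R != fset0.
Proof.
apply/eqP => h.
have : fresh R \in add_elec R by rewrite in_fset1U eqxx.
by rewrite h in_fset0.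
Qed.

Lemma add_pos (A : finType) (R : profile A) i : i \in add_elec R -> (0 < i)%N.
Proof.
rewrite !in_fset1U => /orP [/eqP -> // | /orP [/eqP -> //|]].
exact: elec_pos.
Qed.

Lemma add_strict (A : finType) (R : profile A) (P1 P2 : rel A) :
  strict_total P1 -> strict_total P2 ->
  forall i, i \in add_elec R -> strict_total (add_pref R P1 P2 i).
Proof.
move=> h1 h2 i hi; rewrite /add_pref.
case: ifP => // e1; case: ifP => // e2.
apply: pref_strict.
by move: hi; rewrite !in_fset1U e1 e2.
Qed.

Definition addv (A : finType) (R : profile A) (P1 P2 : rel A)
  (h1 : strict_total P1) (h2 : strict_total P2) : profile A :=
  @Profile A (add_elec R) (add_pref R P1 P2) (@add_nonempty A R) (@add_pos A R)
    (@add_strict A R P1 P2 h1 h2).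

Lemma add_elec_perm (A : finType) (R : profile A) :
  perm_eq (add_elec R) [:: fresh R, (fresh R).+1 & elec R].
Proof.
apply: uniq_perm; first exact: fset_uniq.
- rewrite /= fset_uniq andbT !inE negb_or ltn_eqF //=.
  apply/andP; split; apply/negP => /fresh_notin; first by rewrite ltnn.
  by rewrite ltnNge leqnSn.
- by move=> i; rewrite !in_fset1U !inE.
Qed.

Lemma nprefer_add (A : finType) (R : profile A) (P1 P2 : rel A) h1 h2 x y :
  nprefer (@addv A R P1 P2 h1 h2) x y = (P1 x y + P2 x y + nprefer R x y)%N.
Proof.
rewrite /nprefer !size_filter /=.
rewrite (permP (add_elec_perm R)) /= /add_pref eqxx.
rewrite (gtn_eqF (ltnSn (fresh R))) eqxx addnA; congr (_ + _)%N.
apply: eq_in_count => i hi /=.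
have := fresh_notin hi => lt.
by rewrite (ltn_eqF lt) (ltn_eqF (ltn_trans lt (ltnSn _))).
Qed.

Local Open Scope ring_scope.

Definition dP (A : finType) (P : rel A) (x y : A) : int :=
  (nat_of_bool (P x y))%:Z - (nat_of_bool (P y x))%:Z.

Lemma margin_add (A : finType) (R : profile A) (P1 P2 : rel A) h1 h2 x y :
  margin (@addv A R P1 P2 h1 h2) x y = margin R x y + dP P1 x y + dP P2 x y.
Proof. rewrite /margin /dP !nprefer_add !PoszD; lia. Qed.

Definition revr (A : finType) (P : rel A) : rel A := fun a b => P b a.

Lemma revr_strict (A : finType) (P : rel A) : strict_total P -> strict_total (revr P).
Proof.
case=> hi ht htot; split.
- by move=> a; exact: hi.
- by move=> b a c hab hbc; exact: ht hbc hab.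
- by move=> a b hab; rewrite /revr orbC; apply: htot.
Qed.

Lemma dP_rev (A : finType) (P : rel A) x y : dP (revr P) x y = - dP P x y.
Proof. rewrite /dP /revr; lia. Qed.

Lemma margin_anti (A : finType) (R : profile A) x y : margin R y x = - margin R x y.
Proof. rewrite /margin; lia. Qed.

Lemma lord_lt (A : finType) (l : A -> nat) a b : (l a < l b)%N -> lord l a b.
Proof. by move=> h; rewrite lordE h. Qed.

Lemma step (A : finType) (f : profile A -> {set A})
  (hpw : pairwise_scc f) (hsp : strategyproof f)
  (X : {set A}) (lQ lQ' : {set A} -> A -> nat) (D : A -> A -> int)
  (H1 : forall (W : {set A}) c y, c \notin X -> y \in X -> (lQ W c < lQ W y)%N)
  (H2 : forall (W : {set A}) y z, y \in X -> z \in X -> y \in W -> z \notin W -> (lQ W y < lQ W z)%N)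
  (H3 : forall (W : {set A}) a b, dP (lord (lQ' W)) a b - dP (lord (lQ W)) a b = D a b)
  (R : profile A) :
  f R = X -> exists R' : profile A, f R' = X /\
    forall a b, margin R' a b = margin R a b + D a b.
Proof.
move=> hX.
pose Q W := lord (lQ W). pose Q' W := lord (lQ' W).
pose mk1 W := @addv A R (Q W) (revr (Q W)) (lord_strict _) (revr_strict (lord_strict _)).
pose mk2 W := @addv A R (Q' W) (revr (Q W)) (lord_strict _) (revr_strict (lord_strict _)).
have m1 W a b : margin (mk1 W) a b = margin R a b.
  by rewrite margin_add dP_rev; lia.
have m2 W a b : margin (mk2 W) a b = margin R a b + D a b.
  by rewrite margin_add dP_rev -(H3 W) /Q /Q'; lia.
set W := f (mk2 set0).
have fW : f (mk2 W) = W by apply: hpw => a b; rewrite !m2.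
have f1 : f (mk1 W) = X by rewrite -hX; apply: hpw => a b; rewrite m1.
have hv : i_variant (fresh R) (mk1 W) (mk2 W).
  split => //; first by rewrite /= /add_elec in_fset1U eqxx.
  by move=> j _ hj a b; rewrite /= /add_pref (negbTE hj).
have := hsp _ _ _ hv; rewrite fW f1 /= /add_pref eqxx => hnf.
exists (mk2 set0); split; last exact: m2.
case: (eqVneq W X) => // hne; exfalso; apply: hnf; split => //.
- move=> a b; rewrite in_setD => /andP [haX haW] hb.
  by apply: lord_lt; apply: H1.
- move=> a b ha; rewrite in_setD => /andP [hbW hbX].
  apply: lord_lt; case: (boolP (a \in X)) => haX.
  + exact: H2.
  + exact: H1.
Qed.

Lemma iter_step (A : finType) (f : profile A -> {set A})
  (hpw : pairwise_scc f) (hsp : strategyproof f)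
  (X : {set A}) (lQ lQ' : {set A} -> A -> nat) (D : A -> A -> int)
  (H1 : forall (W : {set A}) c y, c \notin X -> y \in X -> (lQ W c < lQ W y)%N)
  (H2 : forall (W : {set A}) y z, y \in X -> z \in X -> y \in W -> z \notin W -> (lQ W y < lQ W z)%N)
  (H3 : forall (W : {set A}) a b, dP (lord (lQ' W)) a b - dP (lord (lQ W)) a b = D a b)
  (k : nat) (R : profile A) :
  f R = X -> exists R' : profile A, f R' = X /\
    forall a b, margin R' a b = margin R a b + D a b *+ k.
Proof.
elim: k R => [|k IH] R hX.
  by exists R; split => // a b; rewrite mulr0n addr0.
have [R1 [h1 m1]] := IH R hX.
have [R2 [h2 m2]] := step hpw hsp H1 H2 H3 h1.
exists R2; split => // a b.
by rewrite m2 m1 mulrS -addrA [D a b + _]addrC.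
Qed.

Definition lQJ (A : finType) (X W : {set A}) (a : A) : nat :=
  if a \in X then (if a \in W then 1 else 2) else 0.
Definition lQJ' (A : finType) (X W : {set A}) (a : A) : nat :=
  if a \in X then (if a \in W then 0 else 1) else 2.
Definition DJ (A : finType) (X : {set A}) (a b : A) : int :=
  if (a \in X) && (b \notin X) then 2 else if (a \notin X) && (b \in X) then -2 else 0.

Lemma J3 (A : finType) (X W : {set A}) a b :
  dP (lord (lQJ' X W)) a b - dP (lord (lQJ X W)) a b = DJ X a b.
Proof.
rewrite /dP !lordE /lQJ /lQJ' /DJ.
case: (a \in X); case: (b \in X); case: (a \in W); case: (b \in W) => /=;
case: (enum_rank a < enum_rank b)%N; case: (enum_rank b < enum_rank a)%N => //=.
Qed.

Definition lQT (A : finType) (X : {set A}) (x : A) (W : {set A}) (a : A) : nat :=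
  if a \in X then (if a \in W then 2 else 3) else (if a == x then 1 else 0).
Definition lQT' (A : finType) (X : {set A}) (x : A) (W : {set A}) (a : A) : nat :=
  if a \in X then (if a \in W then 2 else 3) else (if a == x then 0 else 1).
Definition DT (A : finType) (X : {set A}) (x a b : A) : int :=
  if (a == x) && (a \notin X) && (b \notin X) && (b != x) then 2
  else if (b == x) && (b \notin X) && (a \notin X) && (a != x) then -2 else 0.

Lemma T3 (A : finType) (X W : {set A}) x a b :
  dP (lord (lQT' X x W)) a b - dP (lord (lQT X x W)) a b = DT X x a b.
Proof.
rewrite /dP !lordE /lQT /lQT' /DT.
case: (a \in X); case: (b \in X); case: (a \in W); case: (b \in W);
case: (a == x); case: (b == x) => /=;
case: (enum_rank a < enum_rank b)%N; case: (enum_rank b < enum_rank a)%N => //=.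
Qed.

Lemma nprefer_le (A : finType) (R : profile A) a b : (nprefer R a b <= size (elec R))%N.
Proof. by rewrite /nprefer size_filter count_size. Qed.

Lemma margin_lb (A : finType) (R : profile A) a b : - (size (elec R))%:Z <= margin R a b.
Proof. have := nprefer_le R b a; rewrite /margin; lia. Qed.

Lemma strictE (A : finType) (R : profile A) a b : maj_strict R a b = (0 < margin R a b).
Proof.
rewrite /maj_strict /maj_weak margin_anti.
case: (ltrgtP 0 (margin R a b)) => h; rewrite ?h //=; lia.
Qed.

Theorem lemma5 (A : finType) (f : profile A -> {set A}) :
  is_SCC f -> pairwise_scc f -> strategyproof f -> strongly_condorcet_consistent f ->
  COS_stable f.
Proof.
move=> _ hpw hsp hcc R x [hne hall].
set X := f R.
have mpos : forall y, y \in X :\ x -> 0 < margin R x y.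
  by move=> y /hall; rewrite strictE.
set k := (size (elec R)).+1.
case: (boolP (x \in X)) => hx.
- have H1 : forall (W : {set A}) c y, c \notin X -> y \in X -> (lQJ X W c < lQJ X W y)%N.
    by move=> W c y hc hy; rewrite /lQJ (negbTE hc) hy; case: ifP.
  have H2 : forall (W : {set A}) y z, y \in X -> z \in X -> y \in W -> z \notin W ->
      (lQJ X W y < lQJ X W z)%N.
    by move=> W y z hy hz hyW hzW; rewrite /lQJ hy hz hyW (negbTE hzW).
  have [R' [hf hm]] := iter_step hpw hsp H1 H2 (@J3 A X) k (erefl X).
  have cw : condorcet_winner R' x.
    move=> y hy; rewrite strictE hm /DJ hx /=.
    case: (boolP (y \in X)) => hyX /=.
    + by rewrite mul0rn addr0; apply: mpos; rewrite in_setD1 hy.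
    + have := margin_lb R x y; rewrite pmulrn /k; lia.
  move: hne; rewrite -/X -hf ((hcc R' x).2 cw) setDv eqxx //.
- have H1 : forall (W : {set A}) c y, c \notin X -> y \in X ->
      (lQT X x W c < lQT X x W y)%N.
    by move=> W c y hc hy; rewrite /lQT (negbTE hc) hy; case: ifP; case: ifP.
  have H2 : forall (W : {set A}) y z, y \in X -> z \in X -> y \in W -> z \notin W ->
      (lQT X x W y < lQT X x W z)%N.
    by move=> W y z hy hz hyW hzW; rewrite /lQT hy hz hyW (negbTE hzW).
  have [R' [hf hm]] := iter_step hpw hsp H1 H2 (fun W => @T3 A X W x) k (erefl X).
  have cw : condorcet_winner R' x.
    move=> y hy; rewrite strictE hm /DT eqxx hx (negbTE hy) /=.
    case: (boolP (y \in X)) => hyX /=.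
    + by rewrite mul0rn addr0; apply: mpos; rewrite in_setD1 hy.
    + have := margin_lb R x y; rewrite pmulrn /k; lia.
  by move: hx; rewrite -/X -hf ((hcc R' x).2 cw) set11.
Qed.
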